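(* Let $k$ be a positive integer and $x$ an integer with $2\le x\le p^k-1$ (i.e. $x\in\mathbb{Z}_{p^k}\setminus\{0,1\}$). Let $N_x$ be the least period of the sequence $(T_n^i(x)\bmod p)_{i\ge 0}$, let $l_x$ be the multiplicative order modulo $p$ of the integer $T'_{n^{N_x}}(x)$, and let $$v=\max\{t : T_n^{N_x l_x}(x)\equiv x\pmod{p^t}\}.$$ If $k\ge v$, then the least period of the sequence $(T_n^i(x)\bmod p^k)_{i\ge0}$ equals $N_x\cdot l_x\cdot p^{k-v}$.
   Context: $p$ is a prime with $p>3$ and $n>1$ is an integer with $\gcd(n,p)=\gcd(n,p^2-1)=1$ (so $T_n$ permutes $\mathbb{Z}_{p^j}$ for all $j\ge1$). $T_d(x)\in\mathbb{Z}[x]$ is the Chebyshev polynomial of the first kind: $T_0=1$, $T_1=x$, $T_d=2xT_{d-1}-T_{d-2}$; $T'_d$ is its derivative. $T_n^i$ is the $i$-fold composition of $T_n$ ($T_n^0(x)=x$), computed over $\mathbb{Z}$; $T_n^i=T_{n^i}$. The least period of $(T_n^i(x)\bmod p^j)_{i\ge0}$ is the least positive integer $N$ with $T_n^N(x)\equiv x\pmod{p^j}$. *)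

(* Defs.v *)
From mathcomp Require Import all_boot all_order all_algebra.
Set Implicit Arguments. Unset Strict Implicit. Unset Printing Implicit Defensive.
Import Order.TTheory GRing.Theory Num.Theory.
Local Open Scope ring_scope.

Fixpoint cheb_pair (d : nat) : {poly int} * {poly int} :=
  match d with
  | 0%N => (1, 'X)
  | d'.+1 => let: (a, b) := cheb_pair d' in (b, 2%:P * 'X * b - a)
  end.

Definition cheb (d : nat) : {poly int} := (cheb_pair d).1.

Definition cheb_iter (n i : nat) (x : int) : int := iter i (fun y => (cheb n).[y]) x.

Definition is_least_period (n : nat) (m : int) (x : int) (N : nat) : Prop :=
  (0 < N)%N /\ (cheb_iter n N x == x %[mod m])%Z /\
  forall M : nat, (0 < M)%N -> (M < N)%N -> ~ (cheb_iter n M x == x %[mod m])%Z.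

Definition is_mult_order (a m : int) (l : nat) : Prop :=
  (0 < l)%N /\ (a ^+ l == 1 %[mod m])%Z /\
  forall M : nat, (0 < M)%N -> (M < l)%N -> ~ (a ^+ M == 1 %[mod m])%Z.

Definition is_max_cong_exp (p : nat) (a b : int) (v : nat) : Prop :=
  (a == b %[mod (p ^ v)%:Z])%Z /\
  forall t : nat, (a == b %[mod (p ^ t)%:Z])%Z -> (t <= v)%N.

(* Main.v *)
Require Import Defs.
From mathcomp Require Import all_boot all_order all_algebra.
From mathcomp Require Import ring zify.
Import Order.TTheory GRing.Theory Num.Theory.
Local Open Scope ring_scope.

Lemma cheb_pairE d : cheb_pair d = (cheb d, cheb d.+1).
Proof.
elim: d => [//|d IH]; rewrite /cheb /= IH //.
Qed.

Lemma chebSS d : cheb d.+2 = 2%:P * 'X * cheb d.+1 - cheb d.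
Proof. by rewrite {1}/cheb /= cheb_pairE. Qed.

Definition t (a : nat) (y : int) := (cheb a).[y].

Lemma t0 y : t 0 y = 1. Proof. by rewrite /t /cheb /= hornerC. Qed.
Lemma t1 y : t 1 y = y. Proof. by rewrite /t /cheb /= hornerX. Qed.
Lemma tSS a y : t a.+2 y = 2 * y * t a.+1 y - t a y.
Proof. by rewrite /t chebSS !hornerE. Qed.

Lemma tS a y : (0 < a)%N -> 2 * y * t a y = t a.+1 y + t a.-1 y.
Proof. by case: a => // a _; rewrite tSS /=; ring. Qed.

Lemma t_prod b a y : (b <= a)%N -> 2 * t a y * t b y = t (a + b) y + t (a - b) y.
Proof.
elim: b {-2}b (leqnn b) a => [|m IH] b hb a hba.
  move: hb; rewrite leqn0 => /eqP ->; rewrite t0 addn0 subn0; ring.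
case: b hb hba => [|[|b]] hb hba.
- rewrite t0 addn0 subn0; ring.
- rewrite t1 addn1 subn1 -(@tS a y hba); ring.
- rewrite tSS.
  have h1 := IH b.+1 hb a (ltnW hba).
  have h0 := IH b (ltnW hb) a (ltnW (ltnW hba)).
  have e1 : 2 * y * t (a + b.+1) y = t (a + b.+2) y + t (a + b) y.
    by rewrite tS ?addnS //.
  have e2 : 2 * y * t (a - b.+1) y = t (a - b) y + t (a - b.+2) y.
    rewrite tS ?subn_gt0 //; congr (_ + _); congr t; lia.
  have : 2 * t a y * (2 * y * t b.+1 y - t b y)
     = y * (2 * t a y * t b.+1 y) * 2 - 2 * t a y * t b y by ring.
  move=> ->; rewrite h1 h0.
  have -> : y * (t (a + b.+1) y + t (a - b.+1) y) * 2 =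
     2 * y * t (a + b.+1) y + 2 * y * t (a - b.+1) y by ring.
  rewrite e1 e2; ring.
Qed.

Lemma t_comp a b y : t a (t b y) = t (a * b) y.
Proof.
elim: a {-2}a (leqnn a) => [|m IH] a ha.
  by move: ha; rewrite leqn0 => /eqP ->; rewrite !t0.
case: a ha => [|[|a]] ha.
- by rewrite !t0.
- by rewrite t1 mul1n.
- rewrite tSS (IH a.+1 ha) (IH a (ltnW ha)).
  have hb : (b <= a.+1 * b)%N by rewrite leq_pmull.
  have -> : 2 * t b y * t (a.+1 * b) y = 2 * t (a.+1 * b) y * t b y by ring.
  rewrite (@t_prod b (a.+1 * b)%N y hb).
  have -> : (a.+1 * b + b = a.+2 * b)%N by rewrite [in RHS]mulSn addnC.
  have -> : (a.+1 * b - b = a * b)%N by rewrite mulSn addKn.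
  ring.
Qed.

Lemma cheb_iterE n i x : cheb_iter n i x = t (n ^ i) x.
Proof.
elim: i => [|i IH]; first by rewrite /cheb_iter /= expn0 t1.
rewrite /cheb_iter /= -/(cheb_iter n i x) IH -/(t n _) t_comp expnS //.
Qed.


Lemma dvdzD (d a b : int) : (d %| a)%Z -> (d %| b)%Z -> (d %| a + b)%Z.
Proof. exact: rpredD. Qed.
Lemma dvdzB (d a b : int) : (d %| a)%Z -> (d %| b)%Z -> (d %| a - b)%Z.
Proof. exact: rpredB. Qed.

Lemma taylor (H : {poly int}) (x : int) : exists c : int, forall u : int,
  (u ^+ 3 %| H.[x + u] - H.[x] - H^`().[x] * u - c * u ^+ 2)%Z.
Proof.
pose K := H \Po ('X + x%:P).
have KE y : K.[y] = H.[x + y] by rewrite horner_comp !hornerE addrC.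
have K0 : K`_0 = H.[x] by rewrite -horner_coef0 KE addr0.
have K1 : K`_1 = H^`().[x].
  have -> : K`_1 = K^`()`_0 by rewrite coef_deriv.
  rewrite -horner_coef0 /K deriv_comp !hornerE horner_comp !hornerE.
  rewrite derivD derivX derivC addr0 hornerE mulr1 //.
exists (K`_2) => u; apply/dvdzP.
exists ((drop_poly 3 K).[u]).
rewrite -KE -K0 -K1.
rewrite -{1}(poly_take_drop 3 K) hornerD hornerM hornerXn /take_poly horner_poly.
rewrite !big_ord_recr big_ord0 /=.
ring.
Qed.

Lemma poly_cong (H : {poly int}) (m y z : int) :
  (m %| y - z)%Z -> (m %| H.[y] - H.[z])%Z.
Proof.
move=> hm; have [c hc] := taylor H z.
have := hc (y - z); have -> : z + (y - z) = y by ring. move=> h.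
have e : H.[y] - H.[z] = (H.[y] - H.[z] - H^`().[z] * (y - z) - c * (y - z) ^+ 2)
   + (y - z) * (H^`().[z] + c * (y - z)) by ring.
rewrite e; apply: dvdzD; last exact: dvdz_mulr.
apply: dvdz_trans h; rewrite exprS; exact: dvdz_mulr.
Qed.

Lemma iter_cong (H : {poly int}) (m y z : int) j :
  (m %| y - z)%Z -> (m %| iter j (horner H) y - iter j (horner H) z)%Z.
Proof. by move=> h; elim: j => //= j IH; apply: poly_cong. Qed.


Fixpoint sA (i : nat) : nat := if i is i'.+1 then (sA i' + i')%N else 0%N.
Fixpoint sB (i : nat) : nat := if i is i'.+1 then (sB i' + i' * i')%N else 0%N.

Lemma sAE i : (2 * sA i = i * (i - 1))%N.
Proof. elim: i => //= i IH; rewrite mulnDr IH; case: i {IH} => //= i; rewrite subn1 /=; lia. Qed.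
Lemma sBE i : (6 * sB i = i * (i - 1) * (2 * i - 1))%N.
Proof. elim: i => //= i IH; rewrite mulnDr IH; case: i {IH} => //= i. rewrite !subn1 /=. nia. Qed.

Lemma p_dvd_sA p : prime p -> (2 < p)%N -> (p %| sA p)%N.
Proof.
move=> pp p2; have c : coprime p 2.
  by rewrite prime_coprime //; apply/negP => /dvdn_leq; lia.
by rewrite -(Gauss_dvdr _ c) sAE dvdn_mulr.
Qed.
Lemma p_dvd_sB p : prime p -> (3 < p)%N -> (p %| sB p)%N.
Proof.
move=> pp p2; have c : coprime p 6.
  rewrite prime_coprime //; apply/negP => h.
  have : (p %| 2 * 3)%N by []. rewrite Euclid_dvdM // => /orP [] /dvdn_leq; lia.
by rewrite -(Gauss_dvdr _ c) sBE -mulnA dvdn_mulr.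
Qed.

Lemma step_p (p : nat) (H : {poly int}) (x : int) (w : nat) :
  prime p -> (3 < p)%N -> (0 < w)%N ->
  ((p%:Z) ^+ w %| H.[x] - x)%Z -> (p%:Z %| H^`().[x] - 1)%Z ->
  ((p%:Z) ^+ w.+2 %| iter p (horner H) x - x - p%:Z * (H.[x] - x))%Z.
Proof.
move=> pp p3 w0 /dvdzP [d hD] /dvdzP [a ha].
set q := p%:Z in hD ha *.
set Q := q ^+ w.-1.
have hqw : q ^+ w = q * Q by rewrite /Q -exprS prednK.
rewrite hqw in hD.
have hw2 : q ^+ w.+2 = q ^+ 3 * Q by rewrite /Q -exprD; congr (_ ^+ _); lia.
have [c hc] := taylor H x.
set D := H.[x] - x in hD *.
have inv : forall i : nat, exists e : int,
   iter i (horner H) x - x = i%:Z * D + q * a * D * (sA i)%:Z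
       + c * D ^+ 2 * (sB i)%:Z + q ^+ 3 * Q * e.
  elim=> [|i [e IH]].
    by exists 0; rewrite /= subrr mulr0 !mul0r !mulr0 !addr0.
  set u := iter i (horner H) x - x in IH.
  have [r hr] := dvdzP (hc u).
  have hiter : iter i.+1 (horner H) x = H.[x + u] by rewrite /u addrC subrK.
  set E1 := a * d * (sA i)%:Z + c * Q * d ^+ 2 * (sB i)%:Z + q * e.
  set U1 := i%:Z * d + q * E1.
  exists (e + a ^+ 2 * d * (sA i)%:Z + a * c * Q * d ^+ 2 * (sB i)%:Z + q * a * e
          + c * E1 * Q * (2 * i%:Z * d + q * E1) + r * Q ^+ 2 * U1 ^+ 3).
  have hHxu : H.[x + u] = H.[x] + H^`().[x] * u + c * u ^+ 2 + r * u ^+ 3.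
    by rewrite -hr; ring.
  have hHx : H.[x] = x + d * (q * Q) by rewrite -hD /D; ring.
  have hla : H^`().[x] = 1 + a * q by rewrite -ha; ring.
  rewrite hiter hHxu hHx hla IH /D hHx /U1 /E1.
  rewrite /= !PoszD !PoszM.
  ring.
have [e He] := inv p.
have [A' hA] := dvdnP (p_dvd_sA p pp (ltnW p3)).
have [B' hB] := dvdnP (p_dvd_sB p pp p3).
apply/dvdzP; exists (e + a * d * A'%:Z + c * Q * d ^+ 2 * B'%:Z).
rewrite He hA hB hD hw2 !PoszM.
have -> : Posz p = q by [].
ring.
Qed.


Lemma PoszX' (p k : nat) : (p ^ k)%:Z = p%:Z ^+ k.
Proof. by rewrite -!natz natrX. Qed.

Lemma primez_dvdM (p : nat) (a b : int) : prime p ->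
  (p%:Z %| a * b)%Z -> (p%:Z %| a)%Z || (p%:Z %| b)%Z.
Proof. by move=> pp; rewrite !dvdzE abszM /= Euclid_dvdM. Qed.

Lemma primez_coprime (p : nat) (k : nat) (a : int) : prime p ->
  ~~ (p%:Z %| a)%Z -> coprimez (p%:Z ^+ k) a.
Proof.
move=> pp h; apply: coprimezXl; rewrite coprimezE /=.
by rewrite prime_coprime.
Qed.

Lemma dvdz_pow1 (q a : int) (k : nat) : (q %| a - 1)%Z -> (q %| a ^+ k - 1)%Z.
Proof.
move=> h; elim: k => [|k IH]; first by rewrite expr0 subrr dvdz0.
have -> : a ^+ k.+1 - 1 = a * (a ^+ k - 1) + (a - 1) by rewrite exprS; ring.
by apply: dvdzD => //; apply: dvdz_mull.
Qed.

Lemma iter_congh (h : int -> int) (M : int) y z j :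
  (forall a b, (M %| a - b)%Z -> (M %| h a - h b)%Z) ->
  (M %| y - z)%Z -> (M %| iter j h y - iter j h z)%Z.
Proof. by move=> hh hyz; elim: j => //= j IH; apply: hh. Qed.

Lemma iter_mulP (h : int -> int) (M : int) x P k :
  (forall a b, (M %| a - b)%Z -> (M %| h a - h b)%Z) ->
  (M %| iter P h x - x)%Z -> (M %| iter (k * P) h x - x)%Z.
Proof.
move=> hh hP; elim: k => [|k IH]; first by rewrite mul0n /= subrr dvdz0.
rewrite mulSn iterD.
have -> : iter P h (iter (k * P) h x) - x =
  (iter P h (iter (k * P) h x) - iter P h x) + (iter P h x - x) by ring.
by apply: dvdzD => //; apply: iter_congh.
Qed.

Lemma per_div (h : int -> int) (M : int) x P m :
  (forall a b, (M %| a - b)%Z -> (M %| h a - h b)%Z) ->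
  (0 < P)%N -> (M %| iter P h x - x)%Z ->
  (forall j, (0 < j)%N -> (M %| iter j h x - x)%Z -> (P <= j)%N) ->
  (M %| iter m h x - x)%Z -> (P %| m)%N.
Proof.
move=> hh P0 hP hmin hm.
have e := divn_eq m P.
have hr : (M %| iter ((m %% P)%N) h x - x)%Z.
  have h1 := @iter_mulP h M x P (m %/ P)%N hh hP.
  have h2 := @iter_congh h M _ _ (m %% P)%N hh h1.
  move: hm; rewrite {1}e addnC iterD => hm.
  have -> : iter ((m %% P)%N%N) h x - x = (iter ((m %% P)%N%N) h x - iter ((m %% P)%N%N) h (iter ((m %/ P * P)%N%N) h x))
     + (iter ((m %% P)%N%N) h (iter ((m %/ P * P)%N%N) h x) - x) by ring.
  apply: dvdzD => //; rewrite -opprB -mulN1r; apply: dvdz_mull; exact: h2.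
rewrite /dvdn; case: posnP => // r0.
have := hmin _ r0 hr; rewrite leqNgt ltn_pmod //.
Qed.

Fixpoint Sg (lam : int) (j : nat) : int := if j is j'.+1 then lam * Sg lam j' + 1 else 0.

Lemma Sg_geom lam j : Sg lam j * (lam - 1) = lam ^+ j - 1.
Proof.
elim: j => [|j IH] /=; first by rewrite expr0 subrr mul0r.
by rewrite exprS mulrDl -mulrA IH; ring.
Qed.

Lemma first_order (F : {poly int}) (x q : int) :
  (q %| F.[x] - x)%Z -> forall j,
  (q * (F.[x] - x) %| iter j (horner F) x - x - Sg F^`().[x] j * (F.[x] - x))%Z.
Proof.
move=> /dvdzP [d' hd'].
have [c hc] := taylor F x.
elim=> [|j /dvdzP [t IH]]; first by rewrite /= subrr mul0r subr0 dvdz0.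
set d := F.[x] - x in hd' IH *.
set S := Sg F^`().[x] j in IH.
set y := iter j (horner F) x in IH.
set u := y - x.
have [r hr] := dvdzP (hc u).
apply/dvdzP; exists (F^`().[x] * t + (r * u + c) * (S + q * t) * d' * (S + q * t)).
have hy : iter j.+1 (horner F) x = F.[x + u] by rewrite /u /= -/y addrC subrK.
have hFu : F.[x + u] = F.[x] + F^`().[x] * u + c * u ^+ 2 + r * u ^+ 3 by rewrite -hr; ring.
have hy2 : y = x + S * d + t * (q * d) by rewrite -IH; ring.
have hu : u = d * (S + q * t) by rewrite /u hy2; ring.
rewrite hy hFu /= -/S.
have -> : F.[x] = x + d by rewrite /d; ring.
rewrite hu hd'.
ring.
Qed.

Lemma notmult (p : nat) (F : {poly int}) (x : int) (l v m : nat) :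
  prime p -> (p%:Z %| F.[x] - x)%Z ->
  is_mult_order F^`().[x] p%:Z l ->
  ~ (p%:Z ^+ v.+1 %| iter l (horner F) x - x)%Z ->
  (p%:Z ^+ v %| iter m (horner F) x - x)%Z -> (l %| m)%N.
Proof.
move=> pp hd [l0 [hl hmin]] hnot hm.
set q := p%:Z in hd hl hmin hnot hm.
set lam := F^`().[x] in hl hmin.
set d := F.[x] - x in hd.
move: hl; rewrite eqz_mod_dvd => hl.
case: (boolP (l %| m)%N) => // nd.
have l1 : (1 < l)%N.
  case: l l0 hl hmin hnot nd => [|[|l]] //; by rewrite dvd1n.
have nl1 : ~~ (q %| lam - 1)%Z.
  by apply/negP => h; apply: (hmin 1%N) => //; rewrite eqz_mod_dvd expr1.
have qSl : (q %| Sg lam l)%Z.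
  have := hl; rewrite -Sg_geom => /(@primez_dvdM p _ _ pp) /orP [] //.
  by move=> h; rewrite h in nl1.
have hEl : (q * d %| iter l (horner F) x - x)%Z.
  have h1 := @first_order F x q hd l; rewrite -/lam -/d in h1.
  have [s hs] := dvdzP qSl.
  have -> : iter l (horner F) x - x =
     (iter l (horner F) x - x - Sg lam l * d) + s * (q * d) by rewrite hs; ring.
  by apply: dvdzD => //; apply: dvdz_mull.
have [t ht] := dvdzP (@first_order F x q hd m); rewrite -/lam -/d in ht.
have hEm : iter m (horner F) x - x = d * (Sg lam m + q * t) by rewrite -[LHS](subrK (Sg lam m * d)) ht; ring.
have nS : ~~ (q %| Sg lam m + q * t)%Z.
  apply/negP => h.
  have hS : (q %| Sg lam m)%Z.
    have -> : Sg lam m = (Sg lam m + q * t) - t * q by ring.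
    by apply: dvdzB => //; apply: dvdz_mull; rewrite dvdzz.
  have hlm : (q %| lam ^+ m - 1)%Z by rewrite -Sg_geom; apply: dvdz_mulr.
  set r := (m %% l)%N.
  have r0 : (0 < r)%N by rewrite lt0n.
  have rl : (r < l)%N by rewrite ltn_mod ltnW.
  apply: (hmin r r0 rl); rewrite eqz_mod_dvd.
  have e : lam ^+ m - 1 = lam ^+ r * ((lam ^+ l) ^+ (m %/ l)%N - 1) + (lam ^+ r - 1).
    have -> : lam ^+ m = lam ^+ r * (lam ^+ l) ^+ (m %/ l)%N by rewrite -exprM -exprD mulnC addnC -divn_eq.
    ring.
  have h2 : (q %| lam ^+ r * ((lam ^+ l) ^+ (m %/ l)%N - 1))%Z.
    by apply: dvdz_mull; apply: dvdz_pow1.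
  have -> : lam ^+ r - 1 = (lam ^+ m - 1) - lam ^+ r * ((lam ^+ l) ^+ (m %/ l)%N - 1) by rewrite e; ring.
  exact: dvdzB.
have cop := @primez_coprime p v _ pp nS.
move: hm; rewrite hEm (Gauss_dvdzl _ cop) => hvd.
apply: False_ind; apply: hnot.
apply: dvdz_trans hEl.
by rewrite exprSr mulrC; apply: dvdz_mul => //; rewrite dvdzz.
Qed.


Definition piter (F : {poly int}) (m : nat) := iter m (fun Q => F \Po Q) 'X.

Lemma piter_eval F m y : (piter F m).[y] = iter m (horner F) y.
Proof.
elim: m => [|m IH]; first by rewrite /piter /= hornerX.
by rewrite /piter iterS -/(piter F m) horner_comp IH.
Qed.

Lemma all_cong (F : {poly int}) (x q : int) :
  (q %| F.[x] - x)%Z -> forall j, (q %| iter j (horner F) x - x)%Z.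
Proof.
move=> h j; rewrite -(muln1 j).
apply: (@iter_mulP (horner F) q x 1%N j) => //.
by move=> a b; apply: poly_cong.
Qed.

Lemma piter_deriv (F : {poly int}) (x q : int) m :
  (q %| F.[x] - x)%Z -> (q %| (piter F m)^`().[x] - F^`().[x] ^+ m)%Z.
Proof.
move=> hq; elim: m => [|m IH].
  by rewrite /piter /= derivX hornerC expr0 subrr dvdz0.
rewrite /piter iterS -/(piter F m) deriv_comp hornerM horner_comp.
set P := piter F m in IH *.
have h1 : (q %| F^`().[P.[x]] - F^`().[x])%Z.
  by apply: poly_cong; rewrite piter_eval; apply: all_cong.
have -> : F^`().[P.[x]] * P^`().[x] - F^`().[x] ^+ m.+1 =
  (F^`().[P.[x]] - F^`().[x]) * P^`().[x] + F^`().[x] * (P^`().[x] - F^`().[x] ^+ m)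
  by rewrite exprS; ring.
by apply: dvdzD; [apply: dvdz_mulr | apply: dvdz_mull].
Qed.

Lemma chain (p : nat) (F : {poly int}) (x : int) (l v : nat) :
  prime p -> (3 < p)%N -> (0 < v)%N ->
  (p%:Z %| F.[x] - x)%Z -> (p%:Z %| F^`().[x] ^+ l - 1)%Z ->
  (p%:Z ^+ v %| iter l (horner F) x - x)%Z ->
  ~ (p%:Z ^+ v.+1 %| iter l (horner F) x - x)%Z ->
  forall s, (p%:Z ^+ (v + s) %| iter (l * p ^ s) (horner F) x - x)%Z /\
           ~ (p%:Z ^+ (v + s).+1 %| iter (l * p ^ s) (horner F) x - x)%Z.
Proof.
move=> pp p3 v0 hd hl h0 h1.
set q := p%:Z in hd hl h0 h1 *.
elim=> [|s [IH1 IH2]]; first by rewrite addn0 expn0 muln1.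
set H := piter F (l * p ^ s).
have hH : H.[x] - x = iter (l * p ^ s) (horner F) x - x by rewrite piter_eval.
have hH' : (q %| H^`().[x] - 1)%Z.
  have -> : H^`().[x] - 1 = (H^`().[x] - F^`().[x] ^+ (l * p ^ s)) + (F^`().[x] ^+ (l * p ^ s) - 1) by ring.
  apply: dvdzD; first exact: piter_deriv.
  by rewrite exprM; apply: dvdz_pow1.
have := @step_p p H x (v + s) pp p3 (ltn_addr _ v0).
have IH1' : (q ^+ (v + s) %| H.[x] - x)%Z by rewrite hH.
move=> /(_ IH1' hH').
have -> : iter p (horner H) x = iter (l * p ^ s.+1) (horner F) x.
  rewrite (eq_iter (piter_eval F (l * p ^ s))) -iterM.
  by rewrite expnS mulnCA.
rewrite hH => hst.
have q0 : q != 0 by rewrite /q; apply/eqP => -[] => e; rewrite e in pp.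
split.
  rewrite addnS.
  have -> : iter (l * p ^ s.+1) (horner F) x - x =
    (iter (l * p ^ s.+1) (horner F) x - x - q * (iter (l * p ^ s) (horner F) x - x))
    + q * (iter (l * p ^ s) (horner F) x - x) by ring.
  apply: dvdzD.
    by apply: dvdz_trans hst; apply: dvdz_exp2l.
  by rewrite exprS; apply: dvdz_mul; rewrite ?dvdzz.
move=> h; apply: IH2.
rewrite addnS in h.
have h2 : (q ^+ (v + s).+2 %| q * (iter (l * p ^ s) (horner F) x - x))%Z.
  have -> : q * (iter (l * p ^ s) (horner F) x - x) =
    iter (l * p ^ s.+1) (horner F) x - x -
    (iter (l * p ^ s.+1) (horner F) x - x - q * (iter (l * p ^ s) (horner F) x - x)) by ring.
  exact: dvdzB.
by move: h2; rewrite exprS dvdz_mul2l.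
Qed.


Theorem theorem1 (p n k : nat) (x : int) (N l v : nat) :
  prime p -> (3 < p)%N -> (1 < n)%N ->
  coprime n p -> coprime n (p ^ 2 - 1) ->
  (0 < k)%N -> 2 <= x -> x <= (p ^ k)%:Z - 1 ->
  is_least_period n p%:Z x N ->
  is_mult_order ((cheb (n ^ N))^`().[x]) p%:Z l ->
  is_max_cong_exp p (cheb_iter n (N * l) x) x v ->
  (v <= k)%N ->
  is_least_period n (p ^ k)%:Z x (N * l * p ^ (k - v)).
Proof.
move=> pp p3 n1 _ _ k0 _ _ [N0 [hN hNmin]] hord [hv hvmax] vk.
set q := p%:Z in hN hNmin hord *.
set F := cheb (n ^ N) in hord.
have fE : forall j y, iter j (horner F) y = cheb_iter n (N * j) y.
  move=> j y; rewrite cheb_iterE expnM.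
  elim: j => [|j IH]; first by rewrite /= expn0 t1.
  by rewrite iterS IH -/(t (n ^ N) _) t_comp expnS.
have hT : forall a b, (q %| a - b)%Z -> (q %| (cheb n).[a] - (cheb n).[b])%Z.
  by move=> a b; apply: poly_cong.
have hd : (q %| F.[x] - x)%Z.
  by move: hN; rewrite eqz_mod_dvd -(muln1 N) -fE.
have [l0 [hl _]] := hord.
move: hl; rewrite eqz_mod_dvd => hl.
have hv' : (q ^+ v %| iter l (horner F) x - x)%Z.
  by move: hv; rewrite eqz_mod_dvd PoszX' fE.
have hvnot : ~ (q ^+ v.+1 %| iter l (horner F) x - x)%Z.
  move=> h; have := hvmax v.+1; rewrite eqz_mod_dvd PoszX' -fE => /(_ h).
  by rewrite ltnn.
have v0 : (0 < v)%N.
  apply: hvmax; rewrite eqz_mod_dvd expn1 -fE; exact: all_cong.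
have ch := @chain p F x l v pp p3 v0 hd hl hv' hvnot.
split; first by rewrite !muln_gt0 N0 l0 expn_gt0 prime_gt0.
split.
  rewrite eqz_mod_dvd PoszX' -mulnA -fE.
  by have := (ch (k - v)%N).1; rewrite subnKC.
move=> M M0 MN; rewrite eqz_mod_dvd PoszX' => hM.
have hMp : (q %| cheb_iter n M x - x)%Z.
  by apply: dvdz_trans hM; rewrite -{1}(expr1 q) dvdz_exp2l.
have NM : (N %| M)%N.
  apply: (@per_div (fun y => (cheb n).[y]) q x N M hT N0).
  - by rewrite -eqz_mod_dvd.
  - move=> j j0 hj; rewrite leqNgt; apply/negP => jN.
    by apply: (hNmin j j0 jN); rewrite eqz_mod_dvd.
  - exact: hMp.
have [m hm] := dvdnP NM.
have m0 : (0 < m)%N by move: M0; rewrite hm muln_gt0 => /andP[].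
have hM2 : (q ^+ k %| iter m (horner F) x - x)%Z by rewrite fE mulnC -hm.
have hlm : (l %| m)%N.
  apply: (@notmult p F x l v m pp hd hord hvnot).
  by apply: dvdz_trans hM2; apply: dvdz_exp2l.
have [m2 hm2] := dvdnP hlm.
set g := iter l (horner F).
have gE : forall j, iter j g x = iter (l * j) (horner F) x.
  by move=> j; rewrite mulnC iterM.
have gcong : forall a b, (q ^+ k %| a - b)%Z -> (q ^+ k %| g a - g b)%Z.
  by move=> a b h; apply: iter_cong.
have hex : exists j, (0 < j)%N && (q ^+ k %| iter j g x - x)%Z.
  exists (p ^ (k - v))%N; rewrite expn_gt0 prime_gt0 //= gE.
  by have := (ch (k - v)%N).1; rewrite subnKC.
case: (ex_minnP hex) => P0 /andP [P0pos P0div] P0min.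
have hmin' : forall j, (0 < j)%N -> (q ^+ k %| iter j g x - x)%Z -> (P0 <= j)%N.
  by move=> j j0 hj; apply: P0min; rewrite j0 hj.
have m20 : (0 < m2)%N by move: m0; rewrite hm2 muln_gt0 => /andP[].
have hdm2 : (P0 %| m2)%N.
  apply: (@per_div g (q ^+ k) x P0 m2 gcong P0pos P0div hmin').
  by rewrite gE mulnC -hm2.
have hdp : (P0 %| p ^ (k - v))%N.
  apply: (@per_div g (q ^+ k) x P0 _ gcong P0pos P0div hmin').
  by rewrite gE; have := (ch (k - v)%N).1; rewrite subnKC.
have /(@dvdn_pfactor p P0 (k - v)%N pp) [s sle P0E] := hdp.
have m2lt : (m2 < p ^ (k - v))%N.
  move: MN; rewrite hm hm2 -mulnA mulnC.
  have -> : (N * l * p ^ (k - v) = (l * N) * p ^ (k - v))%N by rewrite (mulnC N).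
  by rewrite ltn_pmul2l // muln_gt0 l0 N0.
have slt : (s < k - v)%N.
  have : (p ^ s < p ^ (k - v))%N.
    by rewrite -P0E; apply: leq_ltn_trans m2lt; apply: dvdn_leq.
  by rewrite ltn_exp2l // prime_gt1.
have [_ hnot] := ch s.
apply: hnot.
apply: dvdz_trans (dvdz_exp2l q (_ : ((v + s).+1 <= k)%N)) _.
  by rewrite -ltn_subRL.
by rewrite -gE -P0E.
Qed.
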